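(* Let $l(y_p,y)$ be a loss function differentiable in $y$, and let $g_l^*=\max_{y_p\in[-1,1]}\left|\frac{\partial l(y_p,y)}{\partial y}\big|_{y=0}\right|$ (assumed finite). Let $\lambda>0$. Suppose gradient-based data filtering is applied, i.e. only instances with gradient $|g_i|\le g_l^*$ are used. Then the sensitivity of the split gain $G(I_L,I_R)=\frac{(\sum_{i\in I_L}g_i)^2}{|I_L|+\lambda}+\frac{(\sum_{i\in I_R}g_i)^2}{|I_R|+\lambda}$ satisfies $\Delta G\le 3{g_l^*}^2$, and the sensitivity of the leaf value $V(I)=-\frac{\sum_{i\in I}g_i}{|I|+\lambda}$ satisfies $\Delta V\le \frac{g_l^*}{1+\lambda}$.
   Context: Gradient-based data filtering (GDF): at each boosting iteration, every training instance whose gradient $g_i$ satisfies $|g_i|>g_l^*$ is discarded for that iteration, so that all instances entering the computations of $G$ and $V$ have $|g_i|\le g_l^*$. Sensitivities are taken over neighboring inputs: for $G$, split configurations $(I_L,I_R)$ and one obtained by adding one instance to $I_L$ or to $I_R$; for $V$, instance sets $I$ and $I\cup\{s\}$. *)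

(* Defs.v *)
From HB Require Import structures.
From mathcomp Require Import all_boot all_order all_algebra.
From mathcomp Require Import all_classical all_reals all_analysis.
Set Implicit Arguments. Unset Strict Implicit. Unset Printing Implicit Defensive.
Import Order.TTheory GRing.Theory Num.Theory.
Local Open Scope ring_scope.

Definition split_gain (R : realType) (T : finType) (g : T -> R) (lambda : R)
  (IL IR : {set T}) : R :=
  (\sum_(i in IL) g i) ^+ 2 / (#|IL|%:R + lambda)
  + (\sum_(i in IR) g i) ^+ 2 / (#|IR|%:R + lambda).

Definition leaf_value (R : realType) (T : finType) (g : T -> R) (lambda : R)
  (I : {set T}) : R :=
  - (\sum_(i in I) g i) / (#|I|%:R + lambda).

(* Main.v *)
Require Import Defs.
From HB Require Import structures.
From mathcomp Require Import all_boot all_order all_algebra.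
From mathcomp Require Import all_classical all_reals all_analysis.
From mathcomp Require Import ring lra.
Import Order.TTheory GRing.Theory Num.Theory.
Local Open Scope ring_scope.

Lemma keyG (R : realFieldType) (n S x c l : R) : 0 <= n -> 0 < l ->
  `|S| <= n * c -> `|x| <= c ->
  `|(x + S) ^+ 2 / (n + 1 + l) - S ^+ 2 / (n + l)| <= 3 * c ^+ 2.
Proof.
move=> n0 l0 hS hx.
have c0 : 0 <= c by apply: le_trans hx.
have P1 : 0 < n + l by lra.
have P2 : 0 < n + 1 + l by lra.
have -> : (x + S) ^+ 2 / (n + 1 + l) - S ^+ 2 / (n + l) =
   ((2 * S * x + x ^+ 2) * (n + l) - S ^+ 2) / ((n + l) * (n + 1 + l)).
  by field; rewrite ?gt_eqF.
rewrite normf_div (gtr0_norm (mulr_gt0 P1 P2)) ler_pdivrMr ?mulr_gt0 //.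
move: hS hx; rewrite !ler_norml => /andP[s1 s2] /andP[x1 x2].
have hSx : `|S * x| <= n * c * c.
  rewrite normrM; apply: ler_pM => //; rewrite ler_norml; lra.
move: hSx; rewrite ler_norml => /andP[a1 a2].
have hS2 : S ^+ 2 <= (n * c) ^+ 2 by nra.
have hx2 : x ^+ 2 <= c ^+ 2 by nra.
apply/andP; split; nra.
Qed.

Lemma keyV (R : realFieldType) (n S x c l : R) : 0 <= n -> 0 < l ->
  (n = 0 \/ 1 <= n) ->
  `|S| <= n * c -> `|x| <= c ->
  `|- (x + S) / (n + 1 + l) - - S / (n + l)| <= c / (1 + l).
Proof.
move=> n0 l0 hn hS hx.
have c0 : 0 <= c by apply: le_trans hx.
have P1 : 0 < n + l by lra.
have P2 : 0 < n + 1 + l by lra.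
have -> : - (x + S) / (n + 1 + l) - - S / (n + l) =
   (S - x * (n + l)) / ((n + l) * (n + 1 + l)).
  by field; rewrite ?gt_eqF.
rewrite normf_div (gtr0_norm (mulr_gt0 P1 P2)) ler_pdivrMr ?mulr_gt0 //.
have hnn : n <= n * n by case: hn => [->|h]; nra.
have hb : `|S - x * (n + l)| <= n * c + c * (n + l).
  apply: le_trans (ler_normB _ _) _; rewrite normrM (gtr0_norm P1); apply: lerD.
    by [].
  by apply: ler_pM => //; lra.
apply: le_trans hb _; rewrite mulrAC ler_pdivlMr; last lra.
nra.
Qed.

Lemma sum_bound (R : realType) (T : finType) (g : T -> R) (c : R) (A : {set T}) :
  (forall i, i \in A -> `|g i| <= c) -> `|\sum_(i in A) g i| <= #|A|%:R * c.
Proof.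
move=> h; apply: le_trans (ler_norm_sum _ _ _) _.
have -> : #|A|%:R * c = \sum_(i in A) c by rewrite sumr_const mulr_natl.
exact: ler_sum.
Qed.

Lemma sumU1 (R : realType) (T : finType) (g : T -> R) (A : {set T}) s :
  s \notin A -> \sum_(i in s |: A) g i = g s + \sum_(i in A) g i /\
    (#|s |: A|%:R : R) = #|A|%:R + 1.
Proof.
move=> hs; split; first by rewrite big_setU1.
by rewrite cardsU1 hs natrD addrC.
Qed.

Lemma nat01 (R : realType) (k : nat) : (k%:R : R) = 0 \/ 1 <= (k%:R : R).
Proof. by case: k => [|k]; [left|right; rewrite ler1n]. Qed.

Theorem corollary1 (R : realType) (T : finType) (l : R -> R -> R)
  (gstar lambda : R) (g : T -> R) :
  (* l(y_p, .) differentiable (at y = 0) for y_p in [-1,1] *)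
  (forall yp : R, -1 <= yp <= 1 -> derivable (l yp) 0 1) ->
  (* g_l^* = max_{y_p in [-1,1]} |dl(y_p,y)/dy at y = 0| (attained, finite) *)
  (exists2 yp : R, -1 <= yp <= 1 & gstar = `|derive1 (l yp) 0|) ->
  (forall yp : R, -1 <= yp <= 1 -> `|derive1 (l yp) 0| <= gstar) ->
  0 < lambda ->
  (* sensitivity of G over neighbouring split configurations *)
  (forall (IL IR : {set T}) (s : T),
      [disjoint IL & IR] -> s \notin IL :|: IR ->
      (forall i, i \in s |: (IL :|: IR) -> `|g i| <= gstar) ->
      `|split_gain g lambda (s |: IL) IR - split_gain g lambda IL IR|
        <= 3 * gstar ^+ 2
      /\ `|split_gain g lambda IL (s |: IR) - split_gain g lambda IL IR|
        <= 3 * gstar ^+ 2)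
  /\
  (* sensitivity of V over neighbouring instance sets I, I ∪ {s} *)
  (forall (I : {set T}) (s : T), s \notin I ->
      (forall i, i \in s |: I -> `|g i| <= gstar) ->
      `|leaf_value g lambda (s |: I) - leaf_value g lambda I|
        <= gstar / (1 + lambda)).
Proof.
move=> _ _ _ l0; split.
  move=> IL IR s _ hs hg.
  have c0 : 0 <= gstar by apply: le_trans (normr_ge0 (g s)) (hg s _); rewrite setU11.
  have hgs : `|g s| <= gstar by apply: hg; rewrite setU11.
  have E : forall a a' b : R, (a + b) - (a' + b) = a - a' by move=> *; ring.
  have E2 : forall a b b' : R, (a + b) - (a + b') = b - b' by move=> *; ring.
  rewrite !inE negb_or in hs; case/andP: hs => hL hR.
  rewrite /split_gain E E2; split.
    have [-> ->] := @sumU1 _ _ g _ _ hL.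
    apply: (@keyG _ #|IL|%:R _ (g s) gstar lambda) => //;
      try by rewrite ler0n. apply: sum_bound => i hi; apply: hg.
    by rewrite !inE hi orbT.
  have [-> ->] := @sumU1 _ _ g _ _ hR.
  apply: (@keyG _ #|IR|%:R _ (g s) gstar lambda) => //;
    try by rewrite ler0n. apply: sum_bound => i hi; apply: hg.
  by rewrite !inE hi !orbT.
move=> I s hs hg.
have hgs : `|g s| <= gstar by apply: hg; rewrite setU11.
rewrite /leaf_value; have [-> ->] := @sumU1 _ _ g _ _ hs.
apply: (@keyV _ #|I|%:R _ (g s) gstar lambda) => //;
  try exact: nat01.
by apply: sum_bound => i hi; apply: hg; rewrite !inE hi orbT.
Qed.
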